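(* Let $\alpha_a$ be a labeled dGL hybrid game, $\varphi$ a dGL formula, and $S$ an inductive Angelic subvalue map for $\alpha_a$ with $\models S(\mathsf{end})\rightarrow\varphi$. Then for every subgame label $b\in\mathrm{nodes}(\alpha_a)$, every state satisfying $S(a)$ satisfies $$\big\langle \mathrm{prefix}_b(\mathcal{U}(\alpha_a,S))\big\rangle\,\big\langle \mathrm{suffix}_b(\mathcal{P}(\alpha_a,S))\big\rangle\,\varphi .$$
   Context: Differential game logic (dGL). Hybrid games are generated by $\alpha,\beta ::= x:=e \mid \alpha;\beta \mid ?Q \mid \{x'=f(x)\,\&\,Q\} \mid \alpha^{*} \mid \alpha\cup\beta \mid x:=* \mid\ !Q \mid \{x'=f(x)\,\&\,Q\}^{d} \mid \alpha^{\times} \mid \alpha\cap\beta \mid x:=\otimes$, with $x$ a real variable (vector for ODEs), $e,f(x)$ polynomial terms, $Q$ a formula. Players Angel and Demon: $x:=e$ deterministic assignment; in $x:=*$ Angel (in $x:=\otimes$ Demon) assigns any real to $x$; in $\{x'=f(x)\&Q\}$ Angel (in $\{x'=f(x)\&Q\}^d$ Demon) chooses a duration $r\ge 0$ of following the ODE with $Q$ true throughout; $?Q$ makes Angel lose and $!Q$ makes Demon lose if $Q$ is false (no effect otherwise); in $\alpha\cup\beta$ Angel (in $\alpha\cap\beta$ Demon) chooses the branch; in $\alpha^*$ Angel (in $\alpha^\times$ Demon) decides before each iteration whether to repeat $\alpha$ or stop; $\alpha;\beta$ is sequential composition. $\mathrm{skip}$ denotes $?\mathit{true}$. Formulas: polynomial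 (in)equalities closed under connectives, real quantifiers, and modalities $\langle\alpha\rangle\varphi$ (Angel has a winning strategy in $\alpha$ to reach $\varphi$ whatever Demon does) and $[\alpha]\varphi\equiv\neg\langle\alpha\rangle\neg\varphi$, with the standard dGL semantics: $\langle x:=e\rangle\varphi\leftrightarrow\varphi(x\mapsto e)$, $\langle x:=*\rangle\varphi\leftrightarrow\exists x\varphi$, $\langle x:=\otimes\rangle\varphi\leftrightarrow\forall x\varphi$, $\langle ?Q\rangle\varphi\leftrightarrow Q\wedge\varphi$, $\langle !Q\rangle\varphi\leftrightarrow(Q\rightarrow\varphi)$, $\langle\alpha\cup\beta\rangle\varphi\leftrightarrow\langle\alpha\rangle\varphi\vee\langle\beta\rangle\varphi$, $\langle\alpha\cap\beta\rangle\varphi\leftrightarrow\langle\alpha\rangle\varphi\wedge\langle\beta\rangle\varphi$, $\langle\alpha;\beta\rangle\varphi\leftrightarrow\langle\alpha\rangle\langle\beta\rangle\varphi$; the Angel ODE holds iff some solution of some duration $r\ge0$ staying in $Q$ ends in $\varphi$, the Demon ODE iff all such solutions end in $\varphi$; $\langle\alpha^*\rangle\varphi$ denotes the least set $Z$ of states with $[\![\varphi]\!]\cup\varsigma_\alpha(Z)\subseteq Z$ and $\langle\alpha^\times\rangle\varphi$ the greatest $Z$ with $Z\subseteq[\![\varphi]\!]\cap\varsigma_\alpha(Z)$, where $\varsigma_\alpha(Z)$ is Angel's winning region in $\alpha$ for goal $Z$. $\models\psi$ means $\psi$ is valid. Labels. Every node of the syntax tree of a game carries a unique label. $\alpha_a$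 is a game whose root has label $a$; $\mathrm{nodes}(\alpha_a)$ is the set of labels of its subgames (including $a$). A special label $\mathsf{end}\notin\mathrm{nodes}(\alpha_a)$ is used. A map $S$ assigns formulas to a set of labels containing $\mathrm{nodes}(\alpha_a)\cup\{\mathsf{end}\}$; $S\{\mathsf{end}\mapsto Q\}$ is $S$ with the value at $\mathsf{end}$ replaced by $Q$. Below $\gamma_g,\delta_d$ denote immediate subgames with root labels $g,d$. Game suffix $\mathrm{suffix}_b(\alpha_a)$ for a label $b$ of a subgame: if $b=a$, it is $\alpha_a$. Otherwise: for $\alpha_a=((\gamma_g)^* )_a$ or $((\gamma_g)^\times)_a$ it is $\mathrm{suffix}_b(\gamma_g);\alpha_a$; for $(\gamma_g\cup\delta_d)_a$ or $(\gamma_g\cap\delta_d)_a$ it is the suffix within the branch containing $b$; for $(\gamma_g;\delta_d)_a$ it is $\mathrm{suffix}_b(\gamma_g);\delta_d$ if $b\in\mathrm{nodes}(\gamma_g)$ and $\mathrm{suffix}_b(\delta_d)$ otherwise. Game prefix $\mathrm{prefix}_b(\alpha_a)$: if $b=a$ and $\alpha$ is not a loop, it is $\mathrm{skip}$; if $b=a$ and $\alpha$ is a loop, it is $\alpha_a$. Otherwise: for loops $((\gamma_g)^* )_a,((\gamma_g)^\times)_a$ it is $\alpha_a;\mathrm{prefix}_b(\gamma_g)$; for $\cup,\cap$ the prefix within the branch containing $b$; for $(\gamma_g;\delta_d)_a$ it is $\mathrm{prefix}_b(\gamma_g)$ if $b\in\mathrm{nodes}(\gamma_g)$ and $\gamma_g;\mathrm{prefix}_b(\delta_d)$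 otherwise. Existential projection $\mathcal{P}(\alpha_a,S)$: $(x:=* )_a\mapsto(x:=* )_a;?S(\mathsf{end})$; $\{x'=f(x)\&Q\}_a\mapsto\{x'=f(x)\&Q\}_a;?S(\mathsf{end})$; $(\gamma_g\cup\delta_d)_a\mapsto(?S(g);\mathcal{P}(\gamma_g,S))\cup_a(?S(d);\mathcal{P}(\delta_d,S))$; $((\gamma_g)^* )_a\mapsto\big((?S(g);\mathcal{P}(\gamma_g,S\{\mathsf{end}\mapsto S(a)\}))^*\big)_a;?S(\mathsf{end})$; $(\gamma_g;\delta_d)_a\mapsto\mathcal{P}(\gamma_g,S\{\mathsf{end}\mapsto S(d)\});_a\mathcal{P}(\delta_d,S)$; $(\gamma_g\cap\delta_d)_a\mapsto\mathcal{P}(\gamma_g,S)\cap_a\mathcal{P}(\delta_d,S)$; $((\gamma_g)^\times)_a\mapsto(\mathcal{P}(\gamma_g,S\{\mathsf{end}\mapsto S(a)\})^\times)_a$; $x:=e,x:=\otimes,?Q,!Q,\{x'=f(x)\&Q\}^d$ unchanged. The node replacing the node labeled $a$ keeps label $a$, subgames keep their labels, new nodes get fresh labels. Universal projection $\mathcal{U}(\alpha_a,S)$: $(x:=* )_a\mapsto (x:=\otimes)_a;\,!S(\mathsf{end})$; $\{x'=f(x)\&Q\}_a\mapsto(\{x'=f(x)\&Q\}^d)_a;\,!S(\mathsf{end})$; $(\gamma_g\cup\delta_d)_a\mapsto(!S(g);\mathcal{U}(\gamma_g,S))\cap_a(!S(d);\mathcal{U}(\delta_d,S))$; $((\gamma_g)^*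 )_a\mapsto\big((!S(g);\mathcal{U}(\gamma_g,S\{\mathsf{end}\mapsto S(a)\}))^{\times}\big)_a;\,!S(\mathsf{end})$; $(\gamma_g;\delta_d)_a\mapsto\mathcal{U}(\gamma_g,S\{\mathsf{end}\mapsto S(d)\});_a\mathcal{U}(\delta_d,S)$; $(\gamma_g\cap\delta_d)_a\mapsto\mathcal{U}(\gamma_g,S)\cap_a\mathcal{U}(\delta_d,S)$; $((\gamma_g)^\times)_a\mapsto(\mathcal{U}(\gamma_g,S\{\mathsf{end}\mapsto S(a)\})^\times)_a$; $x:=e,x:=\otimes,?Q,!Q,\{x'=f(x)\&Q\}^d$ unchanged. The node replacing the node labeled $a$ (the Demon counterpart, $\cap$, or $^\times$) keeps label $a$, subgames keep labels, new nodes get fresh labels. Inductive Angelic subvalue map: $S$ is one for $\alpha_a$ (written $S\Vdash\alpha_a$) when recursively: if $\alpha$ is atomic ($x:=e,x:=*,x:=\otimes,?Q,!Q$, an Angel or Demon ODE) then $\models S(a)\rightarrow\langle\alpha\rangle S(\mathsf{end})$; if $(\gamma_g\cup\delta_d)_a$ then $\models S(a)\rightarrow S(g)\vee S(d)$, $S\Vdash\gamma_g$, $S\Vdash\delta_d$; if $(\gamma_g\cap\delta_d)_a$ then $\models S(a)\rightarrow S(g)\wedge S(d)$, $S\Vdash\gamma_g$, $S\Vdash\delta_d$; if $(\gamma_g;\delta_d)_a$ then $\models S(a)\rightarrow S(g)$, $S\{\mathsf{end}\mapsto S(d)\}\Vdash\gamma_g$, $S\Vdash\delta_d$; if $((\gamma_g)^*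 )_a$ then $\models S(a)\rightarrow\langle\mathcal{P}(\alpha_a,S)\rangle S(\mathsf{end})$ and $S\{\mathsf{end}\mapsto S(a)\}\Vdash\gamma_g$; if $((\gamma_g)^\times)_a$ then $\models S(a)\rightarrow S(g)\wedge S(\mathsf{end})$ and $S\{\mathsf{end}\mapsto S(a)\}\Vdash\gamma_g$. *)

(* Defs.v *)
From Stdlib Require Import Reals QArith Qreals List Bool Arith.
Open Scope R_scope.

(* LOrig n : labels of the input game; LFresh a k : the k-th fresh label created
   by a projection at the node labeled a; LEnd : the special label end. *)
Inductive lbl : Type :=
| LOrig (n : nat)
| LFresh (a : lbl) (k : nat)
| LEnd.

Fixpoint lbl_eqb (l1 l2 : lbl) : bool :=
  match l1, l2 with
  | LOrig n, LOrig m => Nat.eqb n m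
  | LFresh a k, LFresh b j => lbl_eqb a b && Nat.eqb k j
  | LEnd, LEnd => true
  | _, _ => false
  end.

Definition var := nat.
Definition state := var -> R.

Inductive term : Type :=
| TVar (x : var)
| TConst (q : Q)
| TNeg (e : term)
| TPlus (e1 e2 : term)
| TTimes (e1 e2 : term).

Inductive fml : Type :=
| FTrue | FFalse
| FEq (e1 e2 : term) | FGe (e1 e2 : term) | FGt (e1 e2 : term)
| FNot (p : fml) | FAnd (p q : fml) | FOr (p q : fml) | FImp (p q : fml)
| FAll (x : var) (p : fml) | FEx (x : var) (p : fml)
| FDia (g : game) (p : fml)
| FBox (g : game) (p : fml)
with game : Type :=
| GAsgn (a : lbl) (x : var) (e : term)
| GRand (a : lbl) (x : var)
| GDRand (a : lbl) (x : var)
| GTest (a : lbl) (Q : fml)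
| GDTest (a : lbl) (Q : fml)
| GODE (a : lbl) (ode : list (var * term)) (Q : fml)
| GDODE (a : lbl) (ode : list (var * term)) (Q : fml)
| GSeq (a : lbl) (g1 g2 : game)
| GChoice (a : lbl) (g1 g2 : game)
| GDChoice (a : lbl) (g1 g2 : game)
| GStar (a : lbl) (g : game)
| GCross (a : lbl) (g : game).

Definition glabel (g : game) : lbl :=
  match g with
  | GAsgn a _ _ | GRand a _ | GDRand a _ | GTest a _ | GDTest a _
  | GODE a _ _ | GDODE a _ _ | GSeq a _ _ | GChoice a _ _ | GDChoice a _ _
  | GStar a _ | GCross a _ => a
  end.

Fixpoint nodes (g : game) : list lbl :=
  match g with
  | GSeq a g1 g2 | GChoice a g1 g2 | GDChoice a g1 g2 => a :: nodes g1 ++ nodes g2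
  | GStar a g1 | GCross a g1 => a :: nodes g1
  | _ => glabel g :: nil
  end.

Definition in_nodes (b : lbl) (g : game) : bool := existsb (lbl_eqb b) (nodes g).

Definition well_labeled (g : game) : Prop :=
  NoDup (nodes g) /\ Forall (fun l => exists n, l = LOrig n) (nodes g).

Definition skip_lbl : lbl := LFresh LEnd 0.
Definition skip : game := GTest skip_lbl FTrue.

Fixpoint term_sem (e : term) (w : state) : R :=
  match e with
  | TVar x => w x
  | TConst q => Q2R q
  | TNeg e1 => - term_sem e1 w
  | TPlus e1 e2 => term_sem e1 w + term_sem e2 w
  | TTimes e1 e2 => term_sem e1 w * term_sem e2 w
  end.

Definition upd (w : state) (x : var) (v : R) : state :=
  fun y => if Nat.eqb y x then v else w y.

(* phi : [0,r] -> states is a solution of {ode & Q} from w of duration r: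
   phi 0 = w, variables not in the ode stay constant, Q holds throughout, and
   for each (x, e) in ode the (one-sided at the endpoints) time derivative of
   phi(.)(x) on [0,r] is the value of e. *)
Definition ode_solution (QS : state -> Prop) (ode : list (var * term))
    (w : state) (r : R) (phi : R -> state) : Prop :=
  0 <= r /\
  (forall y, phi 0 y = w y) /\
  (forall t, 0 <= t <= r -> QS (phi t)) /\
  (forall y t, 0 <= t <= r -> ~ In y (map fst ode) -> phi t y = w y) /\
  (forall x e t, In (x, e) ode -> 0 <= t <= r ->
     forall eps, 0 < eps -> exists delta, 0 < delta /\
       forall s, 0 <= s <= r -> s <> t -> Rabs (s - t) < delta ->
         Rabs ((phi s x - phi t x) / (s - t) - term_sem e (phi t)) < eps).

Fixpoint fml_sem (p : fml) (w : state) {struct p} : Prop :=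
  match p with
  | FTrue => True
  | FFalse => False
  | FEq e1 e2 => term_sem e1 w = term_sem e2 w
  | FGe e1 e2 => term_sem e1 w >= term_sem e2 w
  | FGt e1 e2 => term_sem e1 w > term_sem e2 w
  | FNot q => ~ fml_sem q w
  | FAnd q1 q2 => fml_sem q1 w /\ fml_sem q2 w
  | FOr q1 q2 => fml_sem q1 w \/ fml_sem q2 w
  | FImp q1 q2 => fml_sem q1 w -> fml_sem q2 w
  | FAll x q => forall v, fml_sem q (upd w x v)
  | FEx x q => exists v, fml_sem q (upd w x v)
  | FDia g q => game_sem g (fml_sem q) w
  | FBox g q => ~ game_sem g (fun v => ~ fml_sem q v) w
  end
(* game_sem g X = Angel's winning region in g for goal X *)
with game_sem (g : game) (X : state -> Prop) (w : state) {struct g} : Prop :=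
  match g with
  | GAsgn _ x e => X (upd w x (term_sem e w))
  | GRand _ x => exists v, X (upd w x v)
  | GDRand _ x => forall v, X (upd w x v)
  | GTest _ Q => fml_sem Q w /\ X w
  | GDTest _ Q => fml_sem Q w -> X w
  | GODE _ ode Q =>
      exists r phi, ode_solution (fml_sem Q) ode w r phi /\ X (phi r)
  | GDODE _ ode Q =>
      forall r phi, ode_solution (fml_sem Q) ode w r phi -> X (phi r)
  | GSeq _ g1 g2 => game_sem g1 (game_sem g2 X) w
  | GChoice _ g1 g2 => game_sem g1 X w \/ game_sem g2 X w
  | GDChoice _ g1 g2 => game_sem g1 X w /\ game_sem g2 X w
  | GStar _ g1 =>   (* least Z with X u game_sem g1 Z <= Z *)
      forall Z : state -> Prop,
        (forall v, X v \/ game_sem g1 Z v -> Z v) -> Z w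
  | GCross _ g1 =>  (* greatest Z with Z <= X n game_sem g1 Z *)
      exists Z : state -> Prop,
        Z w /\ (forall v, Z v -> X v /\ game_sem g1 Z v)
  end.

Definition valid (p : fml) : Prop := forall w, fml_sem p w.

Fixpoint suffix (b : lbl) (g : game) : game :=
  if lbl_eqb b (glabel g) then g else
  match g with
  | GStar a g1 | GCross a g1 => GSeq (LFresh a 0) (suffix b g1) g
  | GChoice _ g1 g2 | GDChoice _ g1 g2 =>
      if in_nodes b g1 then suffix b g1 else suffix b g2
  | GSeq a g1 g2 =>
      if in_nodes b g1 then GSeq (LFresh a 0) (suffix b g1) g2 else suffix b g2
  | _ => g  (* b not a node: irrelevant *)
  end.

Fixpoint prefix (b : lbl) (g : game) : game :=
  match g with
  | GStar a g1 | GCross a g1 =>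
      if lbl_eqb b a then g else GSeq (LFresh a 0) g (prefix b g1)
  | GChoice a g1 g2 | GDChoice a g1 g2 =>
      if lbl_eqb b a then skip else
      if in_nodes b g1 then prefix b g1 else prefix b g2
  | GSeq a g1 g2 =>
      if lbl_eqb b a then skip else
      if in_nodes b g1 then prefix b g1 else GSeq (LFresh a 0) g1 (prefix b g2)
  | _ => skip
  end.

Definition supd (S : lbl -> fml) (Q : fml) : lbl -> fml :=
  fun l => match l with LEnd => Q | _ => S l end.

Fixpoint proj_ex (g : game) (S : lbl -> fml) : game :=
  match g with
  | GRand a x => GSeq (LFresh a 0) (GRand a x) (GTest (LFresh a 1) (S LEnd))
  | GODE a ode Q => GSeq (LFresh a 0) (GODE a ode Q) (GTest (LFresh a 1) (S LEnd))
  | GChoice a g1 g2 =>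
      GChoice a
        (GSeq (LFresh a 0) (GTest (LFresh a 1) (S (glabel g1))) (proj_ex g1 S))
        (GSeq (LFresh a 2) (GTest (LFresh a 3) (S (glabel g2))) (proj_ex g2 S))
  | GStar a g1 =>
      GSeq (LFresh a 0)
        (GStar a (GSeq (LFresh a 1) (GTest (LFresh a 2) (S (glabel g1)))
                                   (proj_ex g1 (supd S (S a)))))
        (GTest (LFresh a 3) (S LEnd))
  | GSeq a g1 g2 => GSeq a (proj_ex g1 (supd S (S (glabel g2)))) (proj_ex g2 S)
  | GDChoice a g1 g2 => GDChoice a (proj_ex g1 S) (proj_ex g2 S)
  | GCross a g1 => GCross a (proj_ex g1 (supd S (S a)))
  | _ => g
  end.

Fixpoint proj_un (g : game) (S : lbl -> fml) : game :=
  match g with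
  | GRand a x => GSeq (LFresh a 0) (GDRand a x) (GDTest (LFresh a 1) (S LEnd))
  | GODE a ode Q => GSeq (LFresh a 0) (GDODE a ode Q) (GDTest (LFresh a 1) (S LEnd))
  | GChoice a g1 g2 =>
      GDChoice a
        (GSeq (LFresh a 0) (GDTest (LFresh a 1) (S (glabel g1))) (proj_un g1 S))
        (GSeq (LFresh a 2) (GDTest (LFresh a 3) (S (glabel g2))) (proj_un g2 S))
  | GStar a g1 =>
      GSeq (LFresh a 0)
        (GCross a (GSeq (LFresh a 1) (GDTest (LFresh a 2) (S (glabel g1)))
                                    (proj_un g1 (supd S (S a)))))
        (GDTest (LFresh a 3) (S LEnd))
  | GSeq a g1 g2 => GSeq a (proj_un g1 (supd S (S (glabel g2)))) (proj_un g2 S)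
  | GDChoice a g1 g2 => GDChoice a (proj_un g1 S) (proj_un g2 S)
  | GCross a g1 => GCross a (proj_un g1 (supd S (S a)))
  | _ => g
  end.

Fixpoint isv (S : lbl -> fml) (g : game) : Prop :=
  match g with
  | GChoice a g1 g2 =>
      valid (FImp (S a) (FOr (S (glabel g1)) (S (glabel g2)))) /\ isv S g1 /\ isv S g2
  | GDChoice a g1 g2 =>
      valid (FImp (S a) (FAnd (S (glabel g1)) (S (glabel g2)))) /\ isv S g1 /\ isv S g2
  | GSeq a g1 g2 =>
      valid (FImp (S a) (S (glabel g1))) /\ isv (supd S (S (glabel g2))) g1 /\ isv S g2
  | GStar a g1 =>
      valid (FImp (S a) (FDia (proj_ex g S) (S LEnd))) /\ isv (supd S (S a)) g1
  | GCross a g1 =>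
      valid (FImp (S a) (FAnd (S (glabel g1)) (S LEnd))) /\ isv (supd S (S a)) g1
  | _ =>
      valid (FImp (S (glabel g)) (FDia g (S LEnd)))
  end.

(* Main.v *)
Require Import Defs.
From Stdlib Require Import Reals List Bool Arith.

Lemma mono : forall g (X Y : state -> Prop), (forall v, X v -> Y v) ->
  forall w, game_sem g X w -> game_sem g Y w.
Proof.
  induction g; simpl; intros X Y HXY w H; try firstorder.
Qed.

Definition okl (g : game) := forall l, In l (nodes g) -> exists n, l = LOrig n.

Lemma glabel_in : forall g, In (glabel g) (nodes g).
Proof. destruct g; simpl; auto. Qed.

Lemma okl_lbl : forall g, okl g -> glabel g <> LEnd.
Proof. intros g H E. destruct (H _ (glabel_in g)) as [n Hn]. congruence. Qed.

Lemma supd_lbl : forall S Q l, l <> LEnd -> supd S Q l = S l.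
Proof. destruct l; simpl; auto; intros; contradiction. Qed.

Lemma okl_l1 : forall a g1 g2, (forall l, In l (a :: nodes g1 ++ nodes g2) -> exists n, l = LOrig n) -> okl g1.
Proof. intros a g1 g2 H l Hl. apply H. simpl. right. apply in_or_app. auto. Qed.
Lemma okl_l2 : forall a g1 g2, (forall l, In l (a :: nodes g1 ++ nodes g2) -> exists n, l = LOrig n) -> okl g2.
Proof. intros a g1 g2 H l Hl. apply H. simpl. right. apply in_or_app. auto. Qed.
Lemma okl_l : forall a g1, (forall l, In l (a :: nodes g1) -> exists n, l = LOrig n) -> okl g1.
Proof. intros a g1 H l Hl. apply H. simpl. auto. Qed.

Ltac okt := unfold okl in *; simpl in *;
  first [ eapply okl_l1; eassumption | eapply okl_l2; eassumption | eapply okl_l; eassumption ].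

Lemma ex_win : forall g S w, okl g -> isv S g -> fml_sem (S (glabel g)) w ->
  game_sem (proj_ex g S) (fml_sem (S LEnd)) w.
Proof.
  induction g; intros S w Hok Hisv Hw; simpl in Hisv |- *; unfold valid in *; simpl in Hisv.
  all: try exact (Hisv w Hw).
  - destruct (Hisv w Hw) as [v Hv]; eauto.
  - destruct (Hisv w Hw) as [r [p [H1 H2]]]; eauto.
  - destruct Hisv as [H1 [H2 H3]].
    assert (ok1 : okl g1) by okt. assert (ok2 : okl g2) by okt.
    specialize (IHg1 (supd S (S (glabel g2))) w ok1 H2).
    rewrite supd_lbl in IHg1 by (apply okl_lbl; auto). simpl in IHg1.
    eapply mono; [|apply IHg1; apply H1; exact Hw].
    intros v Hv; apply IHg2; auto.
  - destruct Hisv as [H1 [H2 H3]].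
    assert (ok1 : okl g1) by okt. assert (ok2 : okl g2) by okt.
    destruct (H1 w Hw); [left|right]; split; auto.
  - destruct Hisv as [H1 [H2 H3]].
    assert (ok1 : okl g1) by okt. assert (ok2 : okl g2) by okt.
    destruct (H1 w Hw); split; auto.
  - destruct Hisv as [H1 H2]. apply (H1 w Hw).
  - destruct Hisv as [H1 H2].
    assert (ok1 : okl g) by okt.
    exists (fml_sem (S a)). split; auto. intros v Hv.
    destruct (H1 v Hv) as [Hg HE]. split; auto.
    specialize (IHg (supd S (S a)) v ok1 H2).
    rewrite supd_lbl in IHg by (apply okl_lbl; auto). simpl in IHg. auto.
Qed.

Lemma un_win : forall g S w, okl g -> isv S g -> fml_sem (S (glabel g)) w ->
  game_sem (proj_un g S) (fml_sem (S LEnd)) w.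
Proof.
  induction g; intros S w Hok Hisv Hw; simpl in Hisv |- *; unfold valid in *; simpl in Hisv.
  all: try exact (Hisv w Hw).
  - auto.
  - auto.
  - destruct Hisv as [H1 [H2 H3]].
    assert (ok1 : okl g1) by okt. assert (ok2 : okl g2) by okt.
    specialize (IHg1 (supd S (S (glabel g2))) w ok1 H2).
    rewrite supd_lbl in IHg1 by (apply okl_lbl; auto). simpl in IHg1.
    eapply mono; [|apply IHg1; apply H1; exact Hw].
    intros v Hv; apply IHg2; auto.
  - destruct Hisv as [H1 [H2 H3]].
    assert (ok1 : okl g1) by okt. assert (ok2 : okl g2) by okt.
    split; intros; auto.
  - destruct Hisv as [H1 [H2 H3]].
    assert (ok1 : okl g1) by okt. assert (ok2 : okl g2) by okt.
    destruct (H1 w Hw); split; auto.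
  - destruct Hisv as [H1 H2].
    assert (ok1 : okl g) by okt.
    exists (fml_sem (S a)). split; auto. intros v Hv. split; auto.
    intros Hg.
    specialize (IHg (supd S (S a)) v ok1 H2).
    rewrite supd_lbl in IHg by (apply okl_lbl; auto). simpl in IHg. auto.
  - destruct Hisv as [H1 H2].
    assert (ok1 : okl g) by okt.
    exists (fml_sem (S a)). split; auto. intros v Hv.
    destruct (H1 v Hv) as [Hg HE]. split; auto.
    specialize (IHg (supd S (S a)) v ok1 H2).
    rewrite supd_lbl in IHg by (apply okl_lbl; auto). simpl in IHg. auto.
Qed.

Lemma lbl_eqb_true : forall l1 l2, lbl_eqb l1 l2 = true -> l1 = l2.
Proof.
  induction l1; destruct l2; simpl; intros H; try discriminate; auto.
  - apply Nat.eqb_eq in H; subst; auto.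
  - apply andb_true_iff in H as [H1 H2]. apply Nat.eqb_eq in H2. f_equal; auto.
Qed.
Lemma lbl_eqb_refl : forall l, lbl_eqb l l = true.
Proof. induction l; simpl; auto. apply Nat.eqb_refl. rewrite IHl; apply Nat.eqb_refl. Qed.

Lemma in_ex_f : forall (f : lbl -> bool), (forall a k, f (LFresh a k) = false) ->
  forall g S, existsb f (nodes (proj_ex g S)) = existsb f (nodes g).
Proof.
  intros f Hf. induction g; intros S; simpl; rewrite ?existsb_app; simpl;
  rewrite ?IHg1, ?IHg2, ?IHg, ?Hf; simpl; rewrite ?orb_false_r; auto.
Qed.
Lemma in_un_f : forall (f : lbl -> bool), (forall a k, f (LFresh a k) = false) ->
  forall g S, existsb f (nodes (proj_un g S)) = existsb f (nodes g).
Proof.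
  intros f Hf. induction g; intros S; simpl; rewrite ?existsb_app; simpl;
  rewrite ?IHg1, ?IHg2, ?IHg, ?Hf; simpl; rewrite ?orb_false_r; auto.
Qed.
Lemma in_ex : forall g S n, in_nodes (LOrig n) (proj_ex g S) = in_nodes (LOrig n) g.
Proof. intros; unfold in_nodes; apply in_ex_f; reflexivity. Qed.
Lemma in_un : forall g S n, in_nodes (LOrig n) (proj_un g S) = in_nodes (LOrig n) g.
Proof. intros; unfold in_nodes; apply in_un_f; reflexivity. Qed.

Lemma in_nodes_iff : forall n g, in_nodes (LOrig n) g = true <-> In (LOrig n) (nodes g).
Proof.
  intros n g; unfold in_nodes; rewrite existsb_exists; split.
  - intros [x [Hx He]]. apply lbl_eqb_true in He; subst; auto.
  - intros H; exists (LOrig n); split; auto; apply lbl_eqb_refl.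
Qed.

Lemma suf_ft : forall n a k j Q g, suffix (LOrig n) (GSeq (LFresh a k) (GTest (LFresh a j) Q) g) = suffix (LOrig n) g.
Proof. reflexivity. Qed.
Lemma in_ft : forall n a k j Q g, in_nodes (LOrig n) (GSeq (LFresh a k) (GTest (LFresh a j) Q) g) = in_nodes (LOrig n) g.
Proof. reflexivity. Qed.
Lemma in_dft : forall n a k j Q g, in_nodes (LOrig n) (GSeq (LFresh a k) (GDTest (LFresh a j) Q) g) = in_nodes (LOrig n) g.
Proof. reflexivity. Qed.
Lemma pre_dft : forall n a k j Q g, prefix (LOrig n) (GSeq (LFresh a k) (GDTest (LFresh a j) Q) g) = GSeq (LFresh (LFresh a k) 0) (GDTest (LFresh a j) Q) (prefix (LOrig n) g).
Proof. reflexivity. Qed.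

Lemma in2 : forall (b a : lbl) l1 l2, In b (a :: l1 ++ l2) -> b = a \/ In b l1 \/ In b l2.
Proof. simpl; intros b a l1 l2 [H|H]; auto. apply in_app_or in H; tauto. Qed.

Lemma sufE_seq b a g1 g2 : suffix b (GSeq a g1 g2) = if lbl_eqb b a then GSeq a g1 g2 else if in_nodes b g1 then GSeq (LFresh a 0) (suffix b g1) g2 else suffix b g2.
Proof. reflexivity. Qed.
Lemma sufE_choice b a g1 g2 : suffix b (GChoice a g1 g2) = if lbl_eqb b a then GChoice a g1 g2 else if in_nodes b g1 then suffix b g1 else suffix b g2.
Proof. reflexivity. Qed.
Lemma sufE_dchoice b a g1 g2 : suffix b (GDChoice a g1 g2) = if lbl_eqb b a then GDChoice a g1 g2 else if in_nodes b g1 then suffix b g1 else suffix b g2.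
Proof. reflexivity. Qed.
Lemma sufE_star b a g : suffix b (GStar a g) = if lbl_eqb b a then GStar a g else GSeq (LFresh a 0) (suffix b g) (GStar a g).
Proof. reflexivity. Qed.
Lemma sufE_cross b a g : suffix b (GCross a g) = if lbl_eqb b a then GCross a g else GSeq (LFresh a 0) (suffix b g) (GCross a g).
Proof. reflexivity. Qed.
Lemma seq_intro a g1 g2 X w : game_sem g1 (game_sem g2 X) w -> game_sem (GSeq a g1 g2) X w.
Proof. auto. Qed.

Lemma Suf : forall g S n w, okl g -> isv S g -> In (LOrig n) (nodes g) ->
  fml_sem (S (LOrig n)) w ->
  game_sem (suffix (LOrig n) (proj_ex g S)) (fml_sem (S LEnd)) w.
Proof.
  induction g; intros S n w Hok Hisv Hin Hw;
  destruct (Hok _ (glabel_in _)) as [m Hm]; simpl in Hm; subst a.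
  all: try (simpl in Hin; destruct Hin as [Hin|[]]; injection Hin; intros; subst m).
  1-7: (pose proof (ex_win _ S w Hok Hisv Hw) as HH; simpl in HH |- *; unfold in_nodes; simpl; rewrite ?Nat.eqb_refl; simpl; exact HH).
  -
    destruct (Nat.eqb_spec n m) as [->|Hne].
    + pose proof (ex_win _ S w Hok Hisv Hw) as HH.
      cbn [suffix proj_ex lbl_eqb glabel] in HH |- *. rewrite ?Nat.eqb_refl; try exact HH.
    + cbn [suffix proj_ex lbl_eqb glabel]. apply Nat.eqb_neq in Hne. rewrite Hne.
      cbn in Hisv. destruct Hisv as [H1 [H2 H3]].
      assert (ok1 : okl g1) by okt. assert (ok2 : okl g2) by okt.
      rewrite in_ex. destruct (in_nodes (LOrig n) g1) eqn:E.
      * apply in_nodes_iff in E. cbn [game_sem].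
        eapply mono; [|apply (IHg1 _ n w ok1 H2 E Hw)].
        intros v Hv. apply ex_win; auto.
      * apply IHg2; auto. apply in2 in Hin as [Hin|[Hin|Hin]]; auto.
        -- injection Hin; intros; subst; rewrite Nat.eqb_refl in Hne; discriminate.
        -- apply in_nodes_iff in Hin; congruence.
  -
    destruct (Nat.eqb_spec n m) as [->|Hne].
    + pose proof (ex_win _ S w Hok Hisv Hw) as HH.
      cbn [proj_ex] in HH |- *. rewrite sufE_choice. cbn [lbl_eqb]. rewrite Nat.eqb_refl. exact HH.
    + cbn [proj_ex]. rewrite sufE_choice. cbn [lbl_eqb]. apply Nat.eqb_neq in Hne. rewrite Hne.
      cbn in Hisv. destruct Hisv as [H1 [H2 H3]].
      assert (ok1 : okl g1) by okt. assert (ok2 : okl g2) by okt.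
      rewrite in_ft, in_ex, !suf_ft. destruct (in_nodes (LOrig n) g1) eqn:E.
      * apply in_nodes_iff in E. auto.
      * apply IHg2; auto. apply in2 in Hin as [Hin|[Hin|Hin]]; auto.
        -- injection Hin; intros; subst; rewrite Nat.eqb_refl in Hne; discriminate.
        -- apply in_nodes_iff in Hin; congruence.
  -
    destruct (Nat.eqb_spec n m) as [->|Hne].
    + pose proof (ex_win _ S w Hok Hisv Hw) as HH.
      cbn [proj_ex] in HH |- *. rewrite sufE_dchoice. cbn [lbl_eqb]. rewrite Nat.eqb_refl. exact HH.
    + cbn [proj_ex]. rewrite sufE_dchoice. cbn [lbl_eqb]. apply Nat.eqb_neq in Hne. rewrite Hne.
      cbn in Hisv. destruct Hisv as [H1 [H2 H3]].
      assert (ok1 : okl g1) by okt. assert (ok2 : okl g2) by okt.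
      rewrite in_ex. destruct (in_nodes (LOrig n) g1) eqn:E.
      * apply in_nodes_iff in E. auto.
      * apply IHg2; auto. apply in2 in Hin as [Hin|[Hin|Hin]]; auto.
        -- injection Hin; intros; subst; rewrite Nat.eqb_refl in Hne; discriminate.
        -- apply in_nodes_iff in Hin; congruence.
  -
    pose proof Hisv as Hisv0.
    assert (ok1 : okl g) by okt.
    cbn [proj_ex]. rewrite sufE_seq. cbn [lbl_eqb].
    assert (Hst : in_nodes (LOrig n) (GStar (LOrig m)
          (GSeq (LFresh (LOrig m) 1) (GTest (LFresh (LOrig m) 2) (S (glabel g)))
             (proj_ex g (supd S (S (LOrig m))))) ) = true).
    { apply in_nodes_iff. destruct Hin as [Hin|Hin]; [left; auto|right].
      apply in_nodes_iff. rewrite in_ft, in_ex. apply in_nodes_iff; auto. }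
    rewrite Hst. rewrite sufE_star. cbn [lbl_eqb].
    destruct (Nat.eqb_spec n m) as [->|Hne].
    + pose proof (ex_win _ S w Hok Hisv0 Hw) as HH. exact HH.
    + rewrite suf_ft.
      cbn in Hisv. destruct Hisv as [H1 H2].
      apply seq_intro. apply seq_intro.
      assert (Hin' : In (LOrig n) (nodes g)).
      { simpl in Hin. destruct Hin as [Hin|Hin]; auto.
        injection Hin; intros; subst; contradiction. }
      eapply mono; [|apply (IHg _ n w ok1 H2 Hin' Hw)].
      intros v Hv. exact (ex_win _ S v Hok Hisv0 Hv).
  -
    pose proof Hisv as Hisv0.
    assert (ok1 : okl g) by okt.
    cbn [proj_ex]. rewrite sufE_cross. cbn [lbl_eqb].
    destruct (Nat.eqb_spec n m) as [->|Hne].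
    + exact (ex_win _ S w Hok Hisv0 Hw).
    +
      cbn in Hisv. destruct Hisv as [H1 H2].
      apply seq_intro.
      assert (Hin' : In (LOrig n) (nodes g)).
      { simpl in Hin. destruct Hin as [Hin|Hin]; auto.
        injection Hin; intros; subst; contradiction. }
      eapply mono; [|apply (IHg _ n w ok1 H2 Hin' Hw)].
      intros v Hv. exact (ex_win _ S v Hok Hisv0 Hv).
Qed.


Lemma preE_seq b a g1 g2 : prefix b (GSeq a g1 g2) = if lbl_eqb b a then skip else if in_nodes b g1 then prefix b g1 else GSeq (LFresh a 0) g1 (prefix b g2).
Proof. reflexivity. Qed.
Lemma preE_dchoice b a g1 g2 : prefix b (GDChoice a g1 g2) = if lbl_eqb b a then skip else if in_nodes b g1 then prefix b g1 else prefix b g2.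
Proof. reflexivity. Qed.
Lemma preE_cross b a g : prefix b (GCross a g) = if lbl_eqb b a then GCross a g else GSeq (LFresh a 0) (GCross a g) (prefix b g).
Proof. reflexivity. Qed.

Lemma Pre : forall g S n w, okl g -> isv S g -> In (LOrig n) (nodes g) ->
  fml_sem (S (glabel g)) w ->
  game_sem (prefix (LOrig n) (proj_un g S)) (fml_sem (S (LOrig n))) w.
Proof.
  induction g; intros S n w Hok Hisv Hin Hw;
  destruct (Hok _ (glabel_in _)) as [m Hm]; simpl in Hm; subst a.
  all: try (simpl in Hin; destruct Hin as [Hin|[]]; injection Hin; intros; subst m).
  1-7: (simpl; unfold in_nodes; simpl; rewrite ?Nat.eqb_refl; simpl; auto).
  -
    cbn [proj_un]. rewrite preE_seq. cbn [lbl_eqb].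
    destruct (Nat.eqb_spec n m) as [->|Hne].
    + simpl; auto.
    + cbn in Hisv. destruct Hisv as [H1 [H2 H3]].
      assert (ok1 : okl g1) by okt. assert (ok2 : okl g2) by okt.
      rewrite in_un. destruct (in_nodes (LOrig n) g1) eqn:E.
      * apply in_nodes_iff in E.
        apply (IHg1 _ n w ok1 H2 E). rewrite supd_lbl by (apply okl_lbl; auto). apply H1; exact Hw.
      * apply seq_intro. eapply mono; [|apply (un_win g1 (supd S (S (glabel g2))) w ok1 H2)].
        -- intros v Hv. apply IHg2; auto. apply in2 in Hin as [Hin|[Hin|Hin]]; auto.
           ++ injection Hin; intros; subst; contradiction.
           ++ apply in_nodes_iff in Hin; congruence.
        -- rewrite supd_lbl by (apply okl_lbl; auto). apply H1; exact Hw.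
  -
    cbn [proj_un]. rewrite preE_dchoice. cbn [lbl_eqb].
    destruct (Nat.eqb_spec n m) as [->|Hne].
    + simpl; auto.
    + cbn in Hisv. destruct Hisv as [H1 [H2 H3]].
      assert (ok1 : okl g1) by okt. assert (ok2 : okl g2) by okt.
      rewrite in_dft, in_un, !pre_dft. destruct (in_nodes (LOrig n) g1) eqn:E.
      * apply in_nodes_iff in E. simpl. intros Hg. apply IHg1; auto.
      * simpl. intros Hg. apply IHg2; auto. apply in2 in Hin as [Hin|[Hin|Hin]]; auto.
        -- injection Hin; intros; subst; contradiction.
        -- apply in_nodes_iff in Hin; congruence.
  -
    cbn [proj_un]. rewrite preE_dchoice. cbn [lbl_eqb].
    destruct (Nat.eqb_spec n m) as [->|Hne].
    + simpl; auto.
    + cbn in Hisv. destruct Hisv as [H1 [H2 H3]].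
      assert (ok1 : okl g1) by okt. assert (ok2 : okl g2) by okt.
      rewrite in_un. destruct (H1 w Hw) as [Hg1 Hg2]. destruct (in_nodes (LOrig n) g1) eqn:E.
      * apply in_nodes_iff in E. apply IHg1; auto.
      * apply IHg2; auto. apply in2 in Hin as [Hin|[Hin|Hin]]; auto.
        -- injection Hin; intros; subst; contradiction.
        -- apply in_nodes_iff in Hin; congruence.
  -
    assert (ok1 : okl g) by okt.
    cbn in Hisv. destruct Hisv as [H1 H2].
    cbn [proj_un]. rewrite preE_seq. cbn [lbl_eqb].
    assert (Hst : in_nodes (LOrig n) (GCross (LOrig m)
          (GSeq (LFresh (LOrig m) 1) (GDTest (LFresh (LOrig m) 2) (S (glabel g)))
             (proj_un g (supd S (S (LOrig m))))) ) = true).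
    { apply in_nodes_iff. destruct Hin as [Hin|Hin]; [left; auto|right].
      apply in_nodes_iff. rewrite in_dft, in_un. apply in_nodes_iff; auto. }
    rewrite Hst. rewrite preE_cross. cbn [lbl_eqb].
    assert (Hbody : forall v, fml_sem (S (LOrig m)) v ->
      game_sem (GSeq (LFresh (LOrig m) 1) (GDTest (LFresh (LOrig m) 2) (S (glabel g)))
             (proj_un g (supd S (S (LOrig m))))) (fml_sem (S (LOrig m))) v).
    { intros v Hv. simpl. intros Hg. apply (un_win g _ v ok1 H2).
      rewrite supd_lbl by (apply okl_lbl; auto). exact Hg. }
    destruct (Nat.eqb_spec n m) as [->|Hne].
    + exists (fml_sem (S (LOrig m))). split; auto.
    + rewrite pre_dft. apply seq_intro.
      assert (Hin' : In (LOrig n) (nodes g)).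
      { simpl in Hin. destruct Hin as [Hin|Hin]; auto.
        injection Hin; intros; subst; contradiction. }
      exists (fml_sem (S (LOrig m))). split; auto. intros v Hv. split; auto.
      simpl. intros Hg. apply (IHg _ n v ok1 H2 Hin').
      rewrite supd_lbl by (apply okl_lbl; auto). exact Hg.
  -
    assert (ok1 : okl g) by okt.
    cbn in Hisv. destruct Hisv as [H1 H2].
    cbn [proj_un]. rewrite preE_cross. cbn [lbl_eqb].
    assert (Hbody : forall v, fml_sem (S (LOrig m)) v ->
      game_sem (proj_un g (supd S (S (LOrig m)))) (fml_sem (S (LOrig m))) v).
    { intros v Hv. apply (un_win g _ v ok1 H2).
      rewrite supd_lbl by (apply okl_lbl; auto). apply (H1 v Hv). }
    destruct (Nat.eqb_spec n m) as [->|Hne].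
    + exists (fml_sem (S (LOrig m))). split; auto.
    + apply seq_intro.
      assert (Hin' : In (LOrig n) (nodes g)).
      { simpl in Hin. destruct Hin as [Hin|Hin]; auto.
        injection Hin; intros; subst; contradiction. }
      exists (fml_sem (S (LOrig m))). split; auto. intros v Hv. split; auto.
      apply (IHg _ n v ok1 H2 Hin').
      rewrite supd_lbl by (apply okl_lbl; auto). apply (H1 v Hv).
Qed.

Theorem mainTheorem2 (alpha : game) (phi : fml) (S : lbl -> fml) :
  well_labeled alpha ->
  isv S alpha ->
  valid (FImp (S LEnd) phi) ->
  forall b, In b (nodes alpha) ->
  forall w, fml_sem (S (glabel alpha)) w ->
    fml_sem (FDia (prefix b (proj_un alpha S))
                  (FDia (suffix b (proj_ex alpha S)) phi)) w.
Proof.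
  intros [_ Hwl] Hisv Hval b Hb w Hw.
  assert (Hok : okl alpha) by (intros l Hl; rewrite Forall_forall in Hwl; auto).
  destruct (Hok b Hb) as [n ->].
  simpl. eapply mono; [|apply (Pre alpha S n w Hok Hisv Hb Hw)].
  intros v Hv. simpl. eapply mono; [|apply (Suf alpha S n v Hok Hisv Hb Hv)].
  intros u Hu. exact (Hval u Hu).
Qed.
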